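(* For a single parity-check (SPC) product code, the erasure probability of the first decoded information bit under successive cancellation (SC) decoding is equal to the erasure probability of each information bit under Elias' decoding.
   Context: Consider an $m$-dimensional $(n,k)$ systematic single parity-check (SPC) product code, i.e., a product code whose $\ell$-th component code, $\ell=1,\dots,m$, is an $(n_\ell,n_\ell-1)$ SPC code, so that $n=\prod_{\ell}n_\ell$ and $k=\prod_\ell (n_\ell-1)$. Transmission takes place over the binary erasure channel BEC($\epsilon_{\mathrm{ch}}$). The information bits are $u_1,\dots,u_k$. Under successive cancellation (SC) decoding, the bits are decoded in the order $i=1,\dots,k$, the decision on $u_i$ being based on the channel output and on the decisions for $u_1,\dots,u_{i-1}$ (the likelihoods are computed recursively over the dimensions, as for a polar code built from kernels whose first row is $(1,0,\dots,0)$ and whose remaining rows are $(1\,|\,\text{identity})$); over the BEC the decoder outputs an erasure in case of a tie. Under Elias' decoding, the product code is decoded as a serial concatenation, component codes of the first dimension first up to the last dimension in one sweep, and the likelihood of each $u_i$ is computed without using decisions on any other information bit (so all bits are decoded in parallel); over the BEC it also outputs an erasure on ties. With genie-aided knowledge of the preceding bits, the SC erasure probability $\epsilon^{(i)}_{\boldsymbol{G}^{[m]}}$ of bit $i$ obeys $\epsilon^{(i)}_{\boldsymbol{G}^{[m]}}=\epsilon^{(j+1)}_{\boldsymbol{G}^{[m-1]}}\bigl(1-(1-\epsilon^{(j+1)}_{\boldsymbol{G}^{[m-1]}})^{n_m-t}\bigr)$ with $j=\lfloor (i-1)/k_m\rfloor$, $t=((i-1)\bmod k_m)+1$, $k_m=n_m-1$,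 starting from $\epsilon_{\mathrm{ch}}$ at dimension $0$. *)

(* Defs.v *)
From HB Require Import structures.
From mathcomp Require Import all_boot all_order all_algebra.
Set Implicit Arguments. Unset Strict Implicit. Unset Printing Implicit Defensive.
Import Order.TTheory GRing.Theory Num.Theory.
Local Open Scope ring_scope.

(* Dimensions are indexed 0..m-1 (dimension l+1 of the paper is index l);
   the component code of index l is the (n l, n l - 1) SPC code.
   Information positions: all coordinates < n l - 1 (systematic part). *)
Definition Pos (m : nat) (n : nat -> nat) := {dffun forall l : 'I_m, 'I_(n l)}.

Definition info_pos m n (p : Pos m n) : bool :=
  [forall l : 'I_m, (val (p l) < (n l).-1)%N].

Definition same_line m n (l : 'I_m) (p q : Pos m n) : bool :=
  [forall l' : 'I_m, (l' != l) ==> (p l' == q l')].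

(* One step of Elias' decoding over the BEC: all SPC component codes of
   dimension l are decoded (APP/extrinsic, no use of other bit decisions);
   a symbol stays erased iff it was erased and some other symbol of its
   dimension-l line was erased. *)
Definition elias_step m n (l : 'I_m) (E : {set Pos m n}) : {set Pos m n} :=
  [set p in E | [exists q in E, (q != p) && same_line l p q]].

(* Elias' decoding: one sweep over dimensions 1..m; E = set of channel erasures;
   result = set of positions decoded as erasures. *)
Definition elias m n (E : {set Pos m n}) : {set Pos m n} :=
  foldl (fun E' l => elias_step l E') E (enum 'I_m).

Definition elias_erasure_prob (R : ringType) m n (eps : R) (p : Pos m n) : R :=
  \sum_(E : {set Pos m n} | p \in elias E)
     eps ^+ #|E| * (1 - eps) ^+ (#|{: Pos m n}| - #|E|).

(* Genie-aided SC erasure probability eps^{(i)}_{G^[m]} of bit i (1-based),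
   given by the recursion over dimensions, starting from eps at dimension 0. *)
Fixpoint sc_eps (R : ringType) (n : nat -> nat) (eps : R) (m i : nat) : R :=
  match m with
  | 0 => eps
  | m'.+1 =>
      let km := (n m').-1 in
      let j := ((i.-1) %/ km)%N in
      let t := (((i.-1) %% km).+1)%N in
      let e := sc_eps n eps m' j.+1 in
      e * (1 - (1 - e) ^+ (n m' - t))
  end.

(* Main.v *)
Require Import Defs.
From HB Require Import structures.
From mathcomp Require Import all_boot all_order all_algebra.
From mathcomp Require Import zify ring lra.
Import Order.TTheory GRing.Theory Num.Theory.
Set Implicit Arguments. Unset Strict Implicit. Unset Printing Implicit Defensive.
Local Open Scope ring_scope.

Lemma foldr_muln_acc (s : seq nat) a : foldr muln a s = (foldr muln 1 s * a)%N.
Proof. by elim: s => [|x s IH] /=; rewrite ?mul1n // IH mulnA. Qed.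

Lemma cardPos m n : #|{: Pos m.+1 n}| = (#|{: Pos m n}| * n m)%N.
Proof.
rewrite /Pos !card_dep_ffun.
rewrite [in LHS]/image_mem enum_ordSr map_rcons -map_comp foldr_rcons foldr_muln_acc.
by rewrite card_ord muln1.
Qed.

Definition rest m n (p : Pos m.+1 n) : Pos m n :=
  @finfun _ (fun l : 'I_m => 'I_(n l)) (fun l => p (widen_ord (leqnSn m) l)).
Definition lastc m n (p : Pos m.+1 n) : 'I_(n m) := p ord_max.
Definition splt m n (p : Pos m.+1 n) := (rest p, lastc p).

Lemma splt_inj m n : injective (@splt m n).
Proof.
move=> p p' [] /ffunP H1 H2; apply/ffunP => l.
case: (ltnP l m) => hl.
  have -> : l = widen_ord (leqnSn m) (Ordinal hl) by apply: val_inj.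
  by have := H1 (Ordinal hl); rewrite !ffunE.
have -> : l = ord_max by apply: val_inj => /=; have := ltn_ord l; lia.
exact: H2.
Qed.

Lemma splt_bij m n : bijective (@splt m n).
Proof.
apply: inj_card_bij; first exact: splt_inj.
by rewrite card_prod cardPos card_ord.
Qed.

Definition wt (R : ringType) (T : finType) (eps : R) (E : {set T}) : R :=
  \prod_(t : T) (if t \in E then eps else 1 - eps).

Lemma wtE (R : comNzRingType) (T : finType) (eps : R) (E : {set T}) :
  eps ^+ #|E| * (1 - eps) ^+ (#|{: T}| - #|E|) = wt eps E.
Proof.
rewrite /wt (bigID (fun t => t \in E)) /=.
rewrite [X in _ = X * _](eq_bigr (fun _ => eps)); last by move=> t ->.
rewrite [X in _ = _ * X](eq_bigr (fun _ => 1 - eps)); last by move=> t /negbTE ->.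
rewrite prodr_const.
have -> : \prod_(i | i \notin E) (1 - eps) = \prod_(i in [predC E]) (1 - eps).
  by apply: eq_bigl => t; rewrite inE.
by rewrite prodr_const -(cardC E) addKn.
Qed.

Lemma sum_prod (R : comNzRingType) (T : finType) (g : T -> bool -> R) :
  \sum_(E : {set T}) \prod_t g t (t \in E) = \prod_t (g t true + g t false).
Proof.
rewrite (reindex (fun f : {ffun T -> bool} => [set t | f t])); last first.
  apply: onW_bij; exists (fun E : {set T} => [ffun t => t \in E]).
    by move=> f; apply/ffunP => t; rewrite ffunE inE.
  by move=> E; apply/setP => t; rewrite inE ffunE.
rewrite (eq_bigr (fun f : {ffun T -> bool} => \prod_t g t (f t))); last first.
  by move=> f _; apply: eq_bigr => t _; rewrite inE.
rewrite -(bigA_distr_bigA (fun t b => g t b)).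
by apply: eq_bigr => t _; rewrite big_bool.
Qed.

Lemma wt_total (R : comNzRingType) (T : finType) (eps : R) :
  \sum_(E : {set T}) wt eps E = 1.
Proof.
have H := sum_prod (fun t b => if b then eps else 1 - eps).
rewrite /= in H; rewrite /wt H.
by rewrite big1 // => t _; rewrite addrC subrK.
Qed.

Lemma wt_single (R : comNzRingType) (T : finType) (eps : R) (t0 : T) :
  \sum_(E : {set T} | t0 \in E) wt eps E = eps.
Proof.
pose g := fun t b => if t == t0 then (if b then eps else 0) else (if b then eps else 1 - eps).
have H := sum_prod g.
rewrite big_mkcond /= (eq_bigr (fun E : {set T} => \prod_t g t (t \in E))); last first.
  move=> E _ /=; rewrite /wt /g (bigD1 t0) //= [in RHS](bigD1 t0) //= eqxx.
  case: (t0 \in E); last by rewrite !mul0r.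
  congr (_ * _); apply: eq_bigr => t /negbTE -> //.
rewrite H (bigD1 t0) //= /g eqxx addr0 big1 ?mulr1 //.
by move=> t /negbTE ->; rewrite addrC subrK.
Qed.

Lemma ordS_ind m (P : 'I_m.+1 -> Prop) :
  (forall j : 'I_m, P (widen_ord (leqnSn m) j)) -> P ord_max -> forall l, P l.
Proof.
move=> H1 H2 l; case: (ltnP l m) => hl.
  by have -> : l = widen_ord (leqnSn m) (Ordinal hl) by apply: val_inj.
by have -> : l = ord_max by apply: val_inj => /=; have := ltn_ord l; lia.
Qed.

Lemma sl_widen m n (l : 'I_m) (p q : Pos m.+1 n) :
  same_line (widen_ord (leqnSn m) l) p q =
  same_line l (rest p) (rest q) && (lastc p == lastc q).
Proof.
apply/idP/idP.
  move/forallP => H; apply/andP; split.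
    apply/forallP => l'; apply/implyP => hl; rewrite !ffunE.
    apply: (implyP (H (widen_ord (leqnSn m) l'))).
    by move: hl; apply: contra => /eqP [] h; apply/eqP/val_inj.
  apply: (implyP (H ord_max)).
  by apply/eqP => /(congr1 val) /= h; have := ltn_ord l; rewrite -h ltnn.
case/andP => /forallP H1 /eqP H2; apply/forallP.
apply: ordS_ind => [j|]; apply/implyP => hl.
  have := implyP (H1 j); rewrite !ffunE; apply.
  by move: hl; apply: contra => /eqP ->.
by apply/eqP.
Qed.

Lemma sl_max m n (p q : Pos m.+1 n) :
  same_line ord_max p q = (rest p == rest q).
Proof.
apply/idP/idP.
  move/forallP => H; apply/eqP/ffunP => j; rewrite !ffunE; apply/eqP.
  apply: (implyP (H (widen_ord (leqnSn m) j))).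
  by apply/eqP => /(congr1 val) /= h; have := ltn_ord j; rewrite h ltnn.
move/eqP/ffunP => H; apply/forallP.
apply: ordS_ind => [j|]; apply/implyP => hl.
  by have := H j; rewrite !ffunE => ->.
by rewrite eqxx in hl.
Qed.

Definition phi m n (X : {ffun 'I_(n m) -> {set Pos m n}}) : {set Pos m.+1 n} :=
  [set p | rest p \in X (lastc p)].

Section J.
Variables (m : nat) (n : nat -> nat) (join : Pos m n * 'I_(n m) -> Pos m.+1 n).
Hypotheses (hJ1 : cancel (@splt m n) join) (hJ2 : cancel join (@splt m n)).

Lemma rest_join x : rest (join x) = x.1.
Proof. by rewrite -[in RHS](hJ2 x). Qed.
Lemma lastc_join x : lastc (join x) = x.2.
Proof. by rewrite -[in RHS](hJ2 x). Qed.

Lemma phi_bij : bijective (@phi m n).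
Proof.
pose psi : {set Pos m.+1 n} -> {ffun 'I_(n m) -> {set Pos m n}} :=
  fun E => [ffun c => [set q | join (q, c) \in E]].
exists psi.
  move=> X; apply/ffunP => c; apply/setP => q.
  by rewrite ffunE !inE rest_join lastc_join.
move=> E; apply/setP => p; rewrite !inE ffunE inE.
by have -> : (rest p, lastc p) = splt p by []; rewrite hJ1.
Qed.

Lemma step_phi l (X : {ffun 'I_(n m) -> {set Pos m n}}) :
  elias_step (widen_ord (leqnSn m) l) (phi X) =
  phi [ffun c => elias_step l (X c)].
Proof.
apply/setP => p; rewrite /elias_step !inE ffunE inE.
case: (rest p \in X (lastc p)) => //=.
apply/existsP/existsP.
  case=> q /andP [qin /andP [qne sl]]; rewrite inE in qin.
  move: sl; rewrite sl_widen => /andP [sl /eqP hc].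
  exists (rest q); rewrite hc qin sl andbT /=.

  move: qne; apply: contra => /eqP h; apply/eqP; apply: splt_inj.
  by rewrite /splt h hc.
case=> q0 /andP [qin /andP [qne sl]].
exists (join (q0, lastc p)); rewrite inE rest_join lastc_join qin /=.
rewrite sl_widen rest_join lastc_join sl eqxx andbT.
rewrite andbT; move: qne; apply: contra => /eqP h; by rewrite -h rest_join.
Qed.

Lemma step_max p (Y : {ffun 'I_(n m) -> {set Pos m n}}) :
  (p \in elias_step ord_max (phi Y)) =
  (rest p \in Y (lastc p)) && [exists c, (c != lastc p) && (rest p \in Y c)].
Proof.
rewrite /elias_step !inE.
case: (rest p \in Y (lastc p)) => //=.
apply/existsP/existsP.
  case=> q /andP [qin /andP [qne sl]]; rewrite inE in qin.
  move: sl; rewrite sl_max => /eqP hr.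
  exists (lastc q); rewrite hr qin andbT.
  move: qne; apply: contra => /eqP h; apply/eqP; apply: splt_inj.
  by rewrite /splt h hr.
case=> c /andP [cne cin].
exists (join (rest p, c)); rewrite inE rest_join lastc_join cin /=.
rewrite sl_max rest_join eqxx andbT.
rewrite ?andbT; move: cne; apply: contra => /eqP h; by rewrite -h lastc_join.
Qed.

Lemma fold_phi (s : seq (ordinal m)) (X : {ffun 'I_(n m) -> {set Pos m n}}) :
  foldl (fun E l => elias_step l E) (phi X) (map (widen_ord (leqnSn m)) s) =
  phi [ffun c => foldl (fun E l => elias_step l E) (X c) s].
Proof.
elim: s X => [|a s IH] X /=.
  by congr phi; apply/ffunP => c; rewrite ffunE.
rewrite step_phi IH; congr phi; apply/ffunP => c; rewrite !ffunE.
by [].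
Qed.

Lemma elias_phi p (X : {ffun 'I_(n m) -> {set Pos m n}}) :
  (p \in elias (phi X)) =
  (rest p \in elias (X (lastc p))) &&
  [exists c, (c != lastc p) && (rest p \in elias (X c))].
Proof.
rewrite /elias enum_ordSr foldl_rcons fold_phi step_max !ffunE.
congr andb; apply: eq_existsb => c; by rewrite ffunE.
Qed.

Lemma wt_phi (R : comNzRingType) (eps : R) (X : {ffun 'I_(n m) -> {set Pos m n}}) :
  wt eps (phi X) = \prod_(c : 'I_(n m)) wt eps (X c).
Proof.
rewrite /wt (reindex join); last first.
  by apply: onW_bij; exists (@splt m n).
rewrite (eq_bigr (fun x => if x.1 \in X x.2 then eps else 1 - eps)); last first.
  by move=> x _; rewrite inE rest_join lastc_join.
by rewrite exchange_big pair_bigA.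
Qed.

End J.

Lemma elias0 n (E : {set Pos 0 n}) : elias E = E.
Proof.
rewrite /elias; have -> : enum 'I_0 = [::] by apply/eqP; rewrite -size_eq0 size_enum_ord.
by [].
Qed.


Lemma main (R : comNzRingType) (n : nat -> nat) (eps : R) m (p : Pos m n) :
  \sum_(E : {set Pos m n} | p \in elias E) wt eps E = sc_eps n eps m 1.
Proof.
elim: m p => [|m IH] p.
  under eq_bigl => E do rewrite elias0.
  exact: wt_single.
have [join hJ1 hJ2] := splt_bij m n.
rewrite /= div0n mod0n.
set e := sc_eps n eps m 1.
rewrite (reindex (@phi m n)); last exact: onW_bij (phi_bij hJ1 hJ2).
set c0 := lastc p; set q0 := rest p.
pose a := fun Y : {set Pos m n} => q0 \in elias Y.
pose F1 := fun (c : 'I_(n m)) (Y : {set Pos m n}) =>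
  if c == c0 then (if a Y then wt eps Y else 0) else wt eps Y.
pose F2 := fun (c : 'I_(n m)) (Y : {set Pos m n}) =>
  if c == c0 then (if a Y then wt eps Y else 0) else (if a Y then 0 else wt eps Y).
rewrite big_mkcond /=.
rewrite (eq_bigr (fun X : {ffun 'I_(n m) -> {set Pos m n}} => \prod_c F1 c (X c) - \prod_c F2 c (X c))); last first.
  move=> X _; rewrite (elias_phi hJ2) (wt_phi hJ1 hJ2) -/c0 -/q0.
  rewrite (bigD1 c0) //= [\prod_c F1 c _](bigD1 c0) //= [\prod_c F2 c _](bigD1 c0) //=.
  rewrite /F1 /F2 eqxx /a.
  case: (q0 \in elias (X c0)); last by rewrite !mul0r subrr.

  rewrite [X in _ = _ * X - _](eq_bigr (fun c => wt eps (X c))); last by move=> c /negbTE ->.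
  case: existsP => [[c /andP [cne cin]]|hne] /=.
    by rewrite [X in _ - _ * X](bigD1 c) //= (negbTE cne) cin mul0r mulr0 subr0.
  rewrite [X in _ - _ * X](eq_bigr (fun c => wt eps (X c))) ?subrr //.
  move=> c cne; rewrite (negbTE cne).
  by case: ifP => // cin; case: hne; exists c; rewrite cne cin.
rewrite sumrB -(bigA_distr_bigA F1) -(bigA_distr_bigA F2).
have ha : \sum_Y (if a Y then wt eps Y else 0) = e.
  by rewrite -big_mkcond /=; exact: IH.
have hb : \sum_Y (if a Y then 0 else wt eps Y) = 1 - e.
  rewrite -(wt_total (Pos m n) eps) -ha -sumrB; apply: eq_bigr => Y _.
  by case: (a Y); rewrite ?subrr ?subr0.
rewrite (bigD1 c0) //= [X in _ - X](bigD1 c0) //= /F1 /F2 eqxx.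
rewrite ha.
rewrite [X in e * X - _](eq_bigr (fun=> 1)); last first.
  by move=> c /negbTE -> /=; rewrite wt_total.
rewrite [X in _ - e * X](eq_bigr (fun=> 1 - e)); last first.
  by move=> c /negbTE -> /=; rewrite -hb.
rewrite big1_eq mulr1 prodr_const.
have -> : #|(fun i : 'I_(n m) => i != c0)| = (n m).-1.
  by rewrite -[in RHS](card_ord (n m)) -(cardC1 c0); apply: eq_card.
by rewrite subn1 mulrBr mulr1.
Qed.

Theorem lemma3 (R : realFieldType) (m : nat) (n : nat -> nat)
  (hm : (0 < m)%N) (hn : forall l : nat, (l < m)%N -> (2 <= n l)%N)
  (eps : R) (heps0 : 0 <= eps) (heps1 : eps <= 1)
  (p : Pos m n) (hp : info_pos p) :
  elias_erasure_prob eps p = sc_eps n eps m 1.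
Proof.
rewrite /elias_erasure_prob -(main eps p).
by apply: eq_bigr => E _; rewrite wtE.
Qed.
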